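(* (i) For every integer $m\ge1$ and every $n\ge0$, $$v_{2n+1}(x,m,s)=\sum_{k=0}^{n}(-1)^k\binom{2n+1}{2k+1}\frac{(m+2n-2k-1)!\,(2m+2n)!}{(m+2n)!\,(2m+2n-2k-1)!}\,\frac{T_{2k+1}}{2^{2k+1}}\,x^{2k+1}\,v_{2n-2k}(x,m,s).$$ (ii) For $m=0$ and every $n\ge 0$, $$v_{2n+1}(x,0,s)=\sum_{k=0}^{n-1}(-1)^k\binom{2n+1}{2k+1}\frac{T_{2k+1}}{2^{2k+1}}\,x^{2k+1}\,v_{2n-2k}(x,0,s)+(-1)^n\frac{T_{2n+1}}{2^{2n}}\,x^{2n+1}.$$
   Context: For an integer $m\ge0$ and indeterminates $x,s$, $v_0(x,m,s)=1$ and for $n\ge1$ $$v_n(x,m,s)=\sum_{k=0}^{\lfloor n/2\rfloor}(-1)^k\frac{n!}{k!\,(n-2k)!}\,\frac{(m+n-k-1)!}{(m+n-1)!}\,\frac{s^k}{2^{2k}}\,x^{n-2k}.$$ The tangent numbers $T_{2n+1}$ are defined by $\frac{e^z-e^{-z}}{e^z+e^{-z}}=\sum_{n\ge0}(-1)^n\frac{T_{2n+1}}{(2n+1)!}z^{2n+1}$ (so $T_1=1,T_3=2,T_5=16,\dots$). *)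

(* Defs.v *)
From HB Require Import structures.
From mathcomp Require Import all_boot all_order all_algebra.
Set Implicit Arguments. Unset Strict Implicit. Unset Printing Implicit Defensive.
Import Order.TTheory GRing.Theory Num.Theory.
Local Open Scope ring_scope.

Definition vpoly (R : fieldType) (n : nat) (x : R) (m : nat) (s : R) : R :=
  if n is 0 then 1 else
  \sum_(k < n./2.+1)
    (-1) ^+ k * ((n`!)%:R / ((k`!)%:R * ((n - 2 * k)`!)%:R))
      * (((m + n - k - 1)`!)%:R / ((m + n - 1)`!)%:R)
      * (s ^+ k / 2 ^+ (2 * k)) * x ^+ (n - 2 * k).

Definition cosh_coef (n : nat) : rat := if odd n then 0 else ((n`!)%:R)^-1.
Definition sinh_coef (n : nat) : rat := if odd n then ((n`!)%:R)^-1 else 0.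

(* The formal power series sum_n (-1)^n T(2n+1)/(2n+1)! z^(2n+1), as a
   coefficient sequence (T is indexed by the odd number 2n+1). *)
Definition tan_series (T : nat -> rat) (n : nat) : rat :=
  if odd n then (-1) ^+ n./2 * T n / (n`!)%:R else 0.

(* T are the tangent numbers: the series above equals
   (e^z - e^-z)/(e^z + e^-z) = sinh z / cosh z, i.e. (series) * cosh = sinh
   as formal power series (cosh has invertible constant term). *)
Definition tangent_numbers (T : nat -> rat) : Prop :=
  forall N : nat,
    \sum_(i < N.+1) tan_series T i * cosh_coef (N - i) = sinh_coef N.

(* Main.v *)
Require Import Defs.
From HB Require Import structures.
From mathcomp Require Import all_boot all_order all_algebra.
From mathcomp Require Import ring zify.
Set Implicit Arguments. Unset Strict Implicit. Unset Printing Implicit Defensive.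
Import Order.TTheory GRing.Theory Num.Theory.
Local Open Scope ring_scope.

Section Aux.
Variable R : fieldType.
Hypothesis hchar : [pchar R] =i pred0.

Lemma natr_neq0 n : (n.+1)%:R != 0 :> R.
Proof. by rewrite (pcharf0P _).1. Qed.

Lemma fact_neq0A n : (n`!)%:R != 0 :> R.
Proof. by rewrite (pcharf0P _).1 // -lt0n fact_gt0. Qed.

Lemma nz_den (x : rat) : (denq x)%:~R != 0 :> R.
Proof.
case: (denq x) (denq_gt0 x) => [[|n]|n] // _.
exact: natr_neq0.
Qed.

Lemma ratrB (x y : rat) : ratr (x - y) = ratr x - ratr y :> R.
Proof.
have injZtoQ: @injective rat int intr by apply: intr_inj.
have nzd := nz_den.
apply: (canLR (mulfK (nzd _))); apply: (mulIf (nzd x)).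
rewrite mulrAC mulrBl divfK ?nzd // mulrAC -!rmorphM.
apply: (mulIf (nzd y)); rewrite mulrAC mulrBl divfK ?nzd //.
rewrite -!(rmorphM, rmorphB); congr _%:~R; apply: injZtoQ.
rewrite !(rmorphM, rmorphB) /= [_ - _]lock /= -lock !numqE.
by rewrite (mulrAC y) -!mulrBl -mulrA mulrAC !mulrA.
Qed.

Lemma ratr0 : ratr 0 = 0 :> R.
Proof. by rewrite /ratr mul0r. Qed.

Lemma ratrN (x : rat) : ratr (- x) = - ratr x :> R.
Proof. by rewrite -sub0r ratrB ratr0 sub0r. Qed.

Lemma ratrD (x y : rat) : ratr (x + y) = ratr x + ratr y :> R.
Proof. by rewrite -{1}[y]opprK ratrB ratrN opprK. Qed.

Lemma ratrM (x y : rat) : ratr (x * y) = ratr x * ratr y :> R.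
Proof.
have injZtoQ: @injective rat int intr by apply: intr_inj.
have nzd := nz_den.
rewrite /ratr mulrC mulrAC; apply: canLR (mulKf (nzd _)) _; rewrite !mulrA.
do 2!apply: canRL (mulfK (nzd _)) _; rewrite -!rmorphM; congr _%:~R.
apply: injZtoQ; rewrite !rmorphM [x * y]lock /= !numqE -lock.
by rewrite -!mulrA mulrA mulrCA -!mulrA (mulrCA y).
Qed.

Lemma ratr1 : ratr 1 = 1 :> R.
Proof. by rewrite /ratr divr1. Qed.

Lemma ratr_sum (I : Type) (r : seq I) (P : pred I) (F : I -> rat) :
  ratr (\sum_(i <- r | P i) F i) = \sum_(i <- r | P i) ratr (F i) :> R.
Proof. exact: (big_morph _ ratrD ratr0). Qed.

Lemma ratrX (x : rat) n : ratr (x ^+ n) = ratr x ^+ n :> R.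
Proof. by elim: n => [|n IH]; rewrite ?expr0 ?ratr1 // !exprS ratrM IH. Qed.

Lemma ratrVn n : ratr ((n%:R)^-1) = ((n%:R)^-1) :> R.
Proof.
case: n => [|n]; first by rewrite !mulr0n !invr0 ratr0.
have h : ratr (n.+1%:R) * ratr ((n.+1%:R)^-1) = 1 :> R.
  by rewrite -ratrM mulfV ?ratr1 // pnatr_eq0.
rewrite ratr_nat in h.
apply: (mulfI (natr_neq0 n)); by rewrite h mulfV // natr_neq0.
Qed.
End Aux.

Section Conv.
Variable R : fieldType.

Definition conv (f g : nat -> R) (n : nat) : R := \sum_(i < n.+1) f i * g (n - i)%N.

Lemma conv_poly f g N n : (n < N)%N ->
  conv f g n = ((\poly_(i < N) f i) * (\poly_(i < N) g i))`_n.
Proof.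
move=> hn; rewrite coefM; apply: eq_bigr => i _; rewrite !coef_poly.
have hi : (i < N)%N by apply: leq_ltn_trans hn; rewrite -ltnS.
have hni : (n - i < N)%N by apply: leq_ltn_trans hn; rewrite leq_subr.
by rewrite hi hni.
Qed.

Lemma coefM_low (P Q S : {poly R}) N n :
  (forall i, (i < N)%N -> P`_i = Q`_i) -> (n < N)%N -> (P * S)`_n = (Q * S)`_n.
Proof.
move=> hPQ hn; rewrite !coefM; apply: eq_bigr => i _; rewrite hPQ //.
by apply: leq_ltn_trans hn; rewrite -ltnS.
Qed.

Lemma convC f g n : conv f g n = conv g f n.
Proof. by rewrite (conv_poly _ _ (ltnSn n)) mulrC -conv_poly. Qed.

Lemma convA f g h n :
  conv (conv f g) h n = conv f (conv g h) n.
Proof.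
rewrite (conv_poly _ _ (ltnSn n)) (@coefM_low _ (\poly_(i < n.+1) f i * \poly_(i < n.+1) g i) _ n.+1) //; last first.
  by move=> i hi; rewrite coef_poly hi; apply: conv_poly.
rewrite -mulrA [RHS](conv_poly _ _ (ltnSn n)) [in RHS]mulrC.
rewrite [X in _ = X](@coefM_low _ (\poly_(i < n.+1) g i * \poly_(i < n.+1) h i) _ n.+1) //; last first.
  by move=> i hi; rewrite coef_poly hi; apply: conv_poly.
by rewrite mulrC.
Qed.

Lemma convDr f g h n :
  conv f (fun k => g k + h k) n = conv f g n + conv f h n.
Proof. by rewrite /conv -big_split; apply: eq_bigr => i _; rewrite mulrDr. Qed.

Lemma conv_ext f f' g g' n : (forall k, f k = f' k) -> (forall k, g k = g' k) ->
  conv f g n = conv f' g' n.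
Proof. by move=> hf hg; apply: eq_bigr => i _; rewrite hf hg. Qed.

Definition delta (n : nat) : R := (n == 0)%:R.

Lemma conv_delta f n : conv f delta n = f n.
Proof.
rewrite /conv big_ord_recr /= subnn /delta eqxx mulr1 big1 ?add0r //.
move=> i _; rewrite subn_eq0 leqNgt ltn_ord /= mulr0 //.
Qed.

Definition sc (c : R) (f : nat -> R) (n : nat) : R := c ^+ n * f n.

Lemma conv_sc c f g n : conv (sc c f) (sc c g) n = sc c (conv f g) n.
Proof.
rewrite /conv /sc mulr_sumr; apply: eq_bigr => i _.
rewrite mulrACA -exprD subnKC //; exact: ltnSE (ltn_ord i).
Qed.

Definition par (b : bool) (f : nat -> R) := forall n, odd n != b -> f n = 0.

Lemma conv_par b1 b2 f g : par b1 f -> par b2 g -> par (b1 (+) b2) (conv f g).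
Proof.
move=> hf hg n hn; apply: big1 => i _.
have hi : (i <= n)%N by exact: ltnSE (ltn_ord i).
case: (eqVneq (odd i) b1) => h1; last by rewrite hf // mul0r.
case: (eqVneq (odd (n - i)) b2) => h2; last by rewrite hg // mulr0.
by move: hn; rewrite -{1}(subnKC hi) oddD h1 h2 eqxx.
Qed.


Hypothesis hchar : [pchar R] =i pred0.

Lemma fact_neq0 n : (n`!)%:R != 0 :> R.
Proof. by rewrite (pcharf0P _).1 // -lt0n fact_gt0. Qed.

Definition Ec (c : R) (n : nat) : R := c ^+ n / (n`!)%:R.

Lemma binR n i : (i <= n)%N ->
  ('C(n, i))%:R = (n`!)%:R / ((i`!)%:R * ((n - i)`!)%:R) :> R.
Proof.
move=> hi; rewrite -(bin_fact hi) !natrM mulfK //.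
by rewrite mulf_neq0 // fact_neq0.
Qed.

Lemma convE a b n : conv (Ec a) (Ec b) n = Ec (a + b) n.
Proof.
rewrite /Ec addrC exprDn mulr_suml; apply: eq_bigr => i _.
have hi : (i <= n)%N by exact: ltnSE (ltn_ord i).
rewrite -[_ *+ 'C(n, i)]mulr_natr (binR hi).
have h1 := fact_neq0 i; have h2 := fact_neq0 (n - i); have h3 := fact_neq0 n.
field.
by rewrite h1 h2 h3.
Qed.

Lemma Ec0 n : Ec 0 n = delta n.
Proof. by case: n => [|n]; rewrite /Ec /delta ?expr0 ?divr1 // expr0n mul0r. Qed.

Variables tau chv shv : nat -> R.
Hypotheses (htau : par true tau) (hch : par false chv) (hsh : par true shv).
Hypothesis hE : forall n, Ec (2^-1) n = chv n + shv n.
Hypothesis hts : forall n, conv tau chv n = shv n.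

Lemma key_series M : par false (conv M (Ec (- 2^-1))) ->
  forall n, odd n -> conv tau M n = M n.
Proof.
move=> hMt n hn.
set Mt := conv M (Ec (- 2^-1)).
have hM k : M k = conv Mt chv k + conv Mt shv k.
  transitivity (conv Mt (Ec (2^-1)) k); last first.
    by rewrite -convDr; apply: conv_ext => // j; rewrite hE.
  rewrite /Mt convA -[LHS]conv_delta; apply: conv_ext => // j.
  by rewrite convE addNr Ec0.
transitivity (conv tau (fun k => conv Mt chv k + conv Mt shv k) n).
  by apply: conv_ext.
rewrite convDr.
have p1 : par false (conv tau (conv Mt shv)) by apply: (conv_par htau (conv_par hMt hsh)).
have p2 : par false (conv Mt chv) by apply: (conv_par hMt hch).
rewrite [X in _ + X]p1 ?hn // addr0 hM [X in _ = X + _]p2 ?hn // add0r.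
transitivity (conv tau (conv chv Mt) n); first by apply: conv_ext => // j; rewrite convC.
rewrite -convA convC; apply: conv_ext => // j.
Qed.

Lemma natS_neq0 n : (n.+1)%:R != 0 :> R.
Proof. by rewrite (pcharf0P _).1. Qed.

Definition Bt (a c : nat) : R := (a`!)%:R * (c`!)%:R / (((a + c).+1)`!)%:R.

Lemma Brec a c : Bt a c - Bt a.+1 c = Bt a c.+1.
Proof.
rewrite /Bt addnS addSn !factS !natrM.
have h1 := fact_neq0 a; have h2 := fact_neq0 c; have h3 := fact_neq0 (a + c).
have h4 := natS_neq0 (a + c); have h5 := natS_neq0 (a + c).+1.
rewrite -[(a + c).+2]addn2 -[(a + c).+1]addn1 -[c.+1]addn1 -[a.+1]addn1 !natrD.
move: h4; rewrite -addn1 !natrD => h4.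
move: h5; rewrite -addn2 !natrD => h5.
field.
by rewrite h3 h4 h5.
Qed.

Lemma Gsum n : forall a b,
  \sum_(l < n.+1) ('C(n, l))%:R * (-1) ^+ l * Bt (a + l) b = Bt a (b + n).
Proof.
elim: n => [|n IH] a b.
  by rewrite big_ord1 /= bin0 expr0 !mulr1 mul1r !addn0.
rewrite big_ord_recl /= bin0 expr0 !mulr1 mul1r addn0.
have e2 : \sum_(i < n.+1) ('C(n, i))%:R * (-1) ^+ (bump 0 i) * Bt (a + bump 0 i) b
   = - Bt a.+1 (b + n).
  rewrite -(IH a.+1 b) -sumrN; apply: eq_bigr => i _.
  rewrite /bump /= add1n exprS addnS addSn mulN1r mulrN mulNr //.
have e1 : \sum_(i < n.+1) ('C(n, (bump 0 i)))%:R * (-1) ^+ (bump 0 i) * Bt (a + bump 0 i) b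
   = Bt a (b + n) - Bt a b.
  rewrite -(IH a b) [in RHS]big_ord_recl /= bin0 expr0 !mulr1 mul1r addn0 addrC addKr.
  by rewrite big_ord_recr /= bin_small // !mul0r addr0.
under eq_bigr => i _ do rewrite binS natrD mulrDl mulrDl.
rewrite big_split /= e1 e2 addnS -Brec; ring.
Qed.



Lemma two_neq0 : 2 != 0 :> R.
Proof. exact: (natS_neq0 1). Qed.

Lemma sE c d n : sc c (Ec d) n = Ec (c * d) n.
Proof. by rewrite /sc /Ec exprMn mulrA. Qed.

Lemma even_of_V (M : nat -> R) :
  (forall n, conv (sc (-1) M) (Ec 1) n = M n) -> par false (conv M (Ec (- 2^-1))).
Proof.
move=> hV.
have key n : sc (-1) (conv M (Ec (- 2^-1))) n = conv M (Ec (- 2^-1)) n.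
  rewrite -conv_sc.
  transitivity (conv (sc (-1) M) (Ec (2^-1)) n).
    by apply: conv_ext => // j; rewrite sE mulN1r opprK.
  transitivity (conv (sc (-1) M) (conv (Ec 1) (Ec (- 2^-1))) n).
    apply: conv_ext => // j; rewrite convE; congr Ec.
    have h2 := two_neq0; by field.
  by rewrite -convA; apply: conv_ext.
move=> n; rewrite eqbF_neg negbK => hn.
move: (key n); rewrite /sc -signr_odd hn expr1 mulN1r => h.
have : (conv M (Ec (- 2^-1)) n) * 2 = 0.
  by rewrite mulr_natr mulr2n -{1}h addNr.
by move/eqP; rewrite mulf_eq0 (negbTE two_neq0) orbF => /eqP.
Qed.

Definition Mr (r l : nat) : R :=
  ((l + r)`!)%:R / ((l`!)%:R * (((l + 2 * r).+1)`!)%:R).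

Lemma Mr_V r n : conv (sc (-1) (Mr r)) (Ec 1) n = Mr r n.
Proof.
transitivity (\sum_(l < n.+1) ('C(n, l))%:R * (-1) ^+ l * Bt (r + l) r / ((r`!)%:R * (n`!)%:R)).
  apply: eq_bigr => l _.
  have hl : (l <= n)%N by exact: ltnSE (ltn_ord l).
  rewrite /sc /Mr /Ec /Bt (binR hl) expr1n.
  have -> : (r + l + r = l + 2 * r)%N by lia.
  rewrite (addnC r l).
  have h1 := fact_neq0 l; have h2 := fact_neq0 r; have h3 := fact_neq0 n.
  have h4 := fact_neq0 (n - l); have h5 := fact_neq0 (l + 2 * r).+1.
  field.
  by rewrite h1 h2 h3 h4 h5.
rewrite -mulr_suml Gsum /Mr /Bt.
have -> : (r + (r + n) = n + 2 * r)%N by lia.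
rewrite (addnC r n).
have h2 := fact_neq0 r; have h3 := fact_neq0 n; have h5 := fact_neq0 (n + 2 * r).+1.
field.
by rewrite h2 h3 h5.
Qed.

End Conv.

Section Tan.
Variable R : fieldType.
Hypothesis hchar : [pchar R] =i pred0.
Variable T : nat -> rat.
Hypothesis hT : tangent_numbers T.

Definition tauR := sc (2^-1 : R) (fun i => ratr (tan_series T i)).
Definition chR := sc (2^-1 : R) (fun i => ratr (cosh_coef i)).
Definition shR := sc (2^-1 : R) (fun i => ratr (sinh_coef i)).

Lemma par_tau : par true tauR.
Proof.
move=> n; rewrite eqb_id => /negbTE hn.
by rewrite /tauR /sc /tan_series hn ratr0 mulr0.
Qed.

Lemma par_ch : par false chR.
Proof.
move=> n; rewrite eqbF_neg negbK => hn.
by rewrite /chR /sc /cosh_coef hn ratr0 mulr0.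
Qed.

Lemma par_sh : par true shR.
Proof.
move=> n; rewrite eqb_id => /negbTE hn.
by rewrite /shR /sc /sinh_coef hn ratr0 mulr0.
Qed.

Lemma hE_R n : Ec (2^-1 : R) n = chR n + shR n.
Proof.
rewrite /chR /shR /sc -mulrDr /Ec /cosh_coef /sinh_coef.
by case: (odd n); rewrite ratr0 ?addr0 ?add0r (ratrVn hchar).
Qed.

Lemma hts_R n : conv tauR chR n = shR n.
Proof.
rewrite /tauR /chR /shR conv_sc /sc; congr (_ * _).
rewrite -(hT n) (ratr_sum hchar); apply: eq_bigr => i _.
by rewrite (ratrM hchar).
Qed.

Lemma sum_pairs (F : nat -> R) p :
  \sum_(i < (2 * p)%N.+2) F i = \sum_(k < p.+1) (F (2 * k)%N + F (2 * k)%N.+1).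
Proof.
elim: p => [|p IH]; first by rewrite !big_ord_recr !big_ord0 /= !add0r.
rewrite big_ord_recr [in RHS]big_ord_recr /=.
have -> : (2 * p.+1)%N.+1 = ((2 * p)%N.+2).+1 by rewrite mulnS.
rewrite big_ord_recr /= IH -addrA; congr (_ + (_ + _)).
by rewrite mulnS.
Qed.

Lemma conv_odd (f M : nat -> R) p : par true f ->
  conv f M (2 * p)%N.+1 = \sum_(k < p.+1) f (2 * k)%N.+1 * M (2 * p - 2 * k)%N.
Proof.
move=> hf; rewrite /conv (sum_pairs (fun i => f i * M ((2 * p)%N.+1 - i)%N)); apply: eq_bigr => k _.
rewrite hf ?mul0r ?add0r; last by rewrite mul2n odd_double.
have hk : (k <= p)%N by exact: ltnSE (ltn_ord k).
by have -> : ((2 * p)%N.+1 - (2 * k)%N.+1 = 2 * p - 2 * k)%N by lia.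
Qed.

Lemma tan_key r p : Mr R r (2 * p)%N.+1 =
  \sum_(k < p.+1) tauR (2 * k)%N.+1 * Mr R r (2 * p - 2 * k)%N.
Proof.
rewrite -conv_odd; last exact: par_tau.
symmetry; apply: (key_series hchar par_tau par_ch par_sh hE_R hts_R).
  by apply: even_of_V => //; apply: Mr_V.
by rewrite /= oddM.
Qed.

Lemma tan_key0 p : ((((2 * p)%N.+1)`!)%:R)^-1 =
  \sum_(k < p.+1) tauR (2 * k)%N.+1 * (Ec 1 (2 * p - 2 * k)%N + delta R (2 * p - 2 * k)%N).
Proof.
rewrite -(conv_odd (fun l => Ec 1 l + delta R l)); last exact: par_tau.
rewrite (key_series hchar par_tau par_ch par_sh hE_R hts_R).
- by rewrite /Ec expr1n mul1r /delta /= addr0.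
- apply: even_of_V => // n.
  transitivity (conv (fun l => Ec (-1) l + delta R l) (Ec 1) n).
    apply: conv_ext => // j; rewrite /sc mulrDr /Ec expr1n mul1r /delta; congr (_ + _); case: j => [|j] /=; rewrite ?expr0 ?mul1r ?mulr0 //.
  rewrite convC convDr (convE hchar) addrC conv_delta addrC.
  by rewrite subrr Ec0 addrC.
by rewrite /= oddM.
Qed.

End Tan.

Section Main.
Variable R : fieldType.
Hypothesis hchar : [pchar R] =i pred0.
Variable T : nat -> rat.
Hypothesis hT : tangent_numbers T.
Variables x s : R.

Definition vc (N m k : nat) : R :=
  (-1) ^+ k * ((N`!)%:R / ((k`!)%:R * (((N - 2 * k)%N)`!)%:R))
  * ((((m + N - k - 1)%N)`!)%:R / (((m + N - 1)%N)`!)%:R) / 2 ^+ (2 * k).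

Lemma vpolyE N m : vpoly N x m s =
  \sum_(k < N./2.+1) vc N m k * (s ^+ k * x ^+ (N - 2 * k)).
Proof.
case: N => [|N].
  rewrite big_ord1 /vc /= !subn0 !addn0 !expr0 !mulr1 !mul1r.
  by rewrite invr1 !mulr1 mul1r divff // fact_neq0.
rewrite /vpoly; apply: eq_bigr => k _; rewrite /vc; ring.
Qed.

Lemma tauR_odd k : tauR R T (2 * k)%N.+1 =
  (2^-1) ^+ (2 * k)%N.+1 * ((-1) ^+ k * ratr (T (2 * k)%N.+1) / (((2 * k)%N.+1)`!)%:R).
Proof.
rewrite /tauR /sc /tan_series /= oddM /=. congr (_ * _).
have -> : (uphalf (2 * k)%N) = k by rewrite mul2n uphalf_double.
rewrite !(ratrM hchar) (ratrX hchar) (ratrN hchar) ratr1 (ratrVn hchar) //.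
Qed.

Definition Wi (m n k : nat) : R :=
  (-1) ^+ k * ('C((2 * n).+1, (2 * k).+1))%:R
       * (((m + 2 * n - 2 * k - 1)`!)%:R * ((2 * m + 2 * n)`!)%:R
          / (((m + 2 * n)`!)%:R * ((2 * m + 2 * n - 2 * k - 1)`!)%:R))
       * (ratr (T (2 * k).+1) / 2 ^+ (2 * k).+1).

Definition Cj (m n j : nat) : R :=
  (-1) ^+ j * ((((2 * n).+1)`!)%:R * ((2 * m + 2 * n)`!)%:R)
   / ((j`!)%:R * ((m + 2 * n)`!)%:R * 2 ^+ (2 * j)).

Lemma coef_i m' j d k :
  Wi m'.+1 (k + d + j) k * vc (2 * (k + d + j) - 2 * k) m'.+1 j
  = Cj m'.+1 (k + d + j) j * (tauR R T (2 * k)%N.+1 * Mr R (m' + j) (2 * (k + d) - 2 * k)%N).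
Proof.
rewrite tauR_odd /Wi /vc /Cj /Mr binR //; last by lia.
have -> : ((2 * (k + d + j)).+1 - (2 * k).+1 = 2 * (d + j))%N by lia.
have -> : (m'.+1 + 2 * (k + d + j) - 2 * k - 1 = m' + 2 * (d + j))%N by lia.
have -> : (2 * m'.+1 + 2 * (k + d + j) - 2 * k - 1 = (2 * d + 2 * (m' + j)).+1)%N by lia.
have -> : (2 * (k + d + j) - 2 * k = 2 * (d + j))%N by lia.
have -> : (2 * (d + j) - 2 * j = 2 * d)%N by lia.
have -> : (m'.+1 + 2 * (d + j) - j - 1 = 2 * d + (m' + j))%N by lia.
have -> : (m'.+1 + 2 * (d + j) - 1 = m' + 2 * (d + j))%N by lia.
have -> : (2 * (k + d) - 2 * k = 2 * d)%N by lia.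
rewrite exprVn.
have h2 := two_neq0 hchar.
field.
by rewrite !fact_neq0 ?expf_neq0.
Qed.
Lemma coef_i' m' n j k : (j + k <= n)%N ->
  Wi m'.+1 n k * vc (2 * n - 2 * k) m'.+1 j
  = Cj m'.+1 n j * (tauR R T (2 * k)%N.+1 * Mr R (m' + j) (2 * (n - j) - 2 * k)%N).
Proof.
move=> h; have := coef_i m' j (n - j - k) k.
have -> : (k + (n - j - k) + j = n)%N by lia.
by have -> : (k + (n - j - k) = n - j)%N by lia.
Qed.

Lemma coef_i_lhs0 m' j p :
  vc (2 * (p + j)).+1 m'.+1 j = Cj m'.+1 (p + j) j * Mr R (m' + j) (2 * p)%N.+1.
Proof.
rewrite /vc /Cj /Mr.
have -> : ((2 * (p + j)).+1 - 2 * j = (2 * p).+1)%N by lia.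
have -> : (m'.+1 + (2 * (p + j)).+1 - j - 1 = (2 * p).+1 + (m' + j))%N by lia.
have -> : (m'.+1 + (2 * (p + j)).+1 - 1 = m'.+1 + 2 * (p + j))%N by lia.
have -> : (((2 * p).+1 + 2 * (m' + j)).+1 = 2 * m'.+1 + 2 * (p + j))%N by lia.
have h2 := two_neq0 hchar.
field.
by rewrite !fact_neq0 ?expf_neq0.
Qed.

Lemma coef_i_lhs m' n j : (j <= n)%N ->
  vc (2 * n).+1 m'.+1 j = Cj m'.+1 n j * Mr R (m' + j) (2 * (n - j))%N.+1.
Proof.
move=> h; have := coef_i_lhs0 m' j (n - j).
by have -> : (n - j + j = n)%N by lia.
Qed.

Lemma coef_sum_i m' n j : (j <= n)%N ->
  vc (2 * n).+1 m'.+1 j = \sum_(k < (n - j).+1) Wi m'.+1 n k * vc (2 * n - 2 * k) m'.+1 j.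
Proof.
move=> h; rewrite coef_i_lhs // (tan_key hchar hT) mulr_sumr; apply: eq_bigr => k _.
rewrite coef_i' //.
have := ltn_ord k; lia.
Qed.

Definition W0 (n k : nat) : R :=
  (-1) ^+ k * ('C((2 * n).+1, (2 * k).+1))%:R
       * (ratr (T (2 * k).+1) / 2 ^+ (2 * k).+1).

Definition Cj0 (n j : nat) : R :=
  (-1) ^+ j * (((2 * n).+1)`!)%:R / ((j`!)%:R * 2 ^+ (2 * j)).

Lemma coef_ii j' d k :
  W0 (k + d + j'.+1) k * vc (2 * (k + d + j'.+1) - 2 * k) 0 j'.+1
  = Cj0 (k + d + j'.+1) j'.+1 * (tauR R T (2 * k)%N.+1 * Mr R j' (2 * (k + d) - 2 * k)%N).
Proof.
rewrite tauR_odd /W0 /vc /Cj0 /Mr binR //; last by lia.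
have -> : ((2 * (k + d + j'.+1)).+1 - (2 * k).+1 = 2 * (d + j'.+1))%N by lia.
have -> : (2 * (k + d + j'.+1) - 2 * k = 2 * (d + j'.+1))%N by lia.
have -> : (2 * (d + j'.+1) - 2 * j'.+1 = 2 * d)%N by lia.
have -> : (0 + 2 * (d + j'.+1) - j'.+1 - 1 = 2 * d + j')%N by lia.
have -> : (0 + 2 * (d + j'.+1) - 1 = (2 * d + 2 * j').+1)%N by lia.
have -> : (2 * (k + d) - 2 * k = 2 * d)%N by lia.
rewrite exprVn.
have h2 := two_neq0 hchar.
field.
by rewrite !fact_neq0 ?expf_neq0.
Qed.

Lemma coef_ii' n j' k : (j'.+1 + k <= n)%N ->
  W0 n k * vc (2 * n - 2 * k) 0 j'.+1
  = Cj0 n j'.+1 * (tauR R T (2 * k)%N.+1 * Mr R j' (2 * (n - j'.+1) - 2 * k)%N).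
Proof.
move=> h; have := coef_ii j' (n - j'.+1 - k) k.
have -> : (k + (n - j'.+1 - k) + j'.+1 = n)%N by lia.
by have -> : (k + (n - j'.+1 - k) = n - j'.+1)%N by lia.
Qed.

Lemma coef_ii_lhs0 j' p :
  vc (2 * (p + j'.+1)).+1 0 j'.+1 = Cj0 (p + j'.+1) j'.+1 * Mr R j' (2 * p)%N.+1.
Proof.
rewrite /vc /Cj0 /Mr.
have -> : ((2 * (p + j'.+1)).+1 - 2 * j'.+1 = (2 * p).+1)%N by lia.
have -> : (0 + (2 * (p + j'.+1)).+1 - j'.+1 - 1 = (2 * p).+1 + j')%N by lia.
have -> : (0 + (2 * (p + j'.+1)).+1 - 1 = ((2 * p).+1 + 2 * j').+1)%N by lia.
have h2 := two_neq0 hchar.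
field.
by rewrite !fact_neq0 ?expf_neq0.
Qed.

Lemma coef_sum_ii n j' : (j'.+1 <= n)%N ->
  vc (2 * n).+1 0 j'.+1 = \sum_(k < (n - j'.+1).+1) W0 n k * vc (2 * n - 2 * k) 0 j'.+1.
Proof.
move=> h; have := coef_ii_lhs0 j' (n - j'.+1).
have -> : (n - j'.+1 + j'.+1 = n)%N by lia.
move=> ->; rewrite (tan_key hchar hT) mulr_sumr; apply: eq_bigr => k _.
rewrite coef_ii' //.
have := ltn_ord k; lia.
Qed.

Lemma vc00 N : vc N 0 0 = 1.
Proof.
by rewrite /vc !subn0 add0n expr0 !mul1r !divff ?fact_neq0 // muln0 expr0 !mulr1 divr1.

Qed.

Lemma coef0 n :
  vc (2 * n).+1 0 0 = \sum_(k < n.+1) W0 n k * vc (2 * n - 2 * k) 0 0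
    + (-1) ^+ n * (ratr (T (2 * n).+1) / 2 ^+ (2 * n).+1).
Proof.
rewrite vc00.
under eq_bigr => k _ do rewrite vc00 mulr1.
have h0 := tan_key0 hchar hT n.
rewrite (eq_bigr _ (fun k _ => mulrDr _ _ _)) big_split /= in h0.
have hd : \sum_(i < n) tauR R T (2 * i)%N.+1 * delta R (2 * n - 2 * i)%N = 0.
  apply: big1 => k _; rewrite /delta.
  have : (2 * n - 2 * k)%N != 0%N by have := ltn_ord k; lia.
  by move/negbTE => ->; rewrite mulr0.
move: h0; rewrite [X in _ = _ + X]big_ord_recr /= hd.
rewrite add0r subnn /delta eqxx mulr1 => h.
have hf := fact_neq0 hchar (2 * n).+1.
rewrite -[LHS](divff hf) h mulrDr mulr_sumr; congr (_ + _).
  apply: eq_bigr => k _.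
  have hk : (k <= n)%N by exact: ltnSE (ltn_ord k).
  rewrite tauR_odd /W0 /Ec binR //; last by lia.
  have -> : ((2 * n).+1 - (2 * k).+1 = 2 * n - 2 * k)%N by lia.
  rewrite exprVn expr1n.
  have h2 := two_neq0 hchar.
  field.
  by rewrite !fact_neq0 ?expf_neq0.
rewrite tauR_odd exprVn.
have h2 := two_neq0 hchar.
field.
by rewrite !fact_neq0 ?expf_neq0.
Qed.

Lemma tri_aux n a (G : nat -> R) : (a <= n)%N ->
  \sum_(j < (n - a).+1) G j = \sum_(j < n.+1) (if (a + j <= n)%N then G j else 0).
Proof.
move=> ha; rewrite (big_ord_widen n.+1 G); last by lia.
rewrite big_mkcond; apply: eq_bigr => j _.
have -> : ((j < (n - a).+1) = (a + j <= n))%N by apply/idP/idP; lia.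
by [].
Qed.

Lemma tri_swap n (F : nat -> nat -> R) :
  \sum_(k < n.+1) \sum_(j < (n - k).+1) F k j
  = \sum_(j < n.+1) \sum_(k < (n - j).+1) F k j.
Proof.
transitivity (\sum_(k < n.+1) \sum_(j < n.+1) (if (k + j <= n)%N then F k j else 0)).
  apply: eq_bigr => k _; apply: tri_aux; exact: ltnSE (ltn_ord k).
rewrite exchange_big; apply: eq_bigr => j _.
rewrite (tri_aux (fun k => F k j)); last exact: ltnSE (ltn_ord j).
by apply: eq_bigr => k _; rewrite addnC.
Qed.

End Main.

Lemma vpolyE_h (R : fieldType) (hchar : [pchar R] =i pred0) (x s : R) N m h : N./2 = h ->
  vpoly N x m s = \sum_(k < h.+1) vc R N m k * (s ^+ k * x ^+ (N - 2 * k)).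
Proof. by move=> <-; apply: (vpolyE hchar). Qed.

Lemma half_odd n : ((2 * n).+1)./2 = n.
Proof. by rewrite /= mul2n uphalf_double. Qed.

Lemma half_diff n k : ((2 * n - 2 * k)%N)./2 = (n - k)%N.
Proof. by rewrite -mulnBr mul2n doubleK. Qed.

Theorem mainTheorem16 (R : fieldType) (hchar : [pchar R] =i pred0)
  (T : nat -> rat) (hT : tangent_numbers T) (x s : R) :
  (forall m n : nat, (1 <= m)%N ->
     vpoly (2 * n).+1 x m s =
     \sum_(k < n.+1)
       (-1) ^+ k * ('C((2 * n).+1, (2 * k).+1))%:R
       * (((m + 2 * n - 2 * k - 1)`!)%:R * ((2 * m + 2 * n)`!)%:R
          / (((m + 2 * n)`!)%:R * ((2 * m + 2 * n - 2 * k - 1)`!)%:R))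
       * (ratr (T (2 * k).+1) / 2 ^+ (2 * k).+1)
       * x ^+ (2 * k).+1 * vpoly (2 * n - 2 * k) x m s)
  /\
  (forall n : nat,
     vpoly (2 * n).+1 x 0 s =
     \sum_(k < n)
       (-1) ^+ k * ('C((2 * n).+1, (2 * k).+1))%:R
       * (ratr (T (2 * k).+1) / 2 ^+ (2 * k).+1)
       * x ^+ (2 * k).+1 * vpoly (2 * n - 2 * k) x 0 s
     + (-1) ^+ n * (ratr (T (2 * n).+1) / 2 ^+ (2 * n))
       * x ^+ (2 * n).+1).
Proof.
have expo n k j : (k <= n)%N -> (j <= n - k)%N ->
    x ^+ (2 * k).+1 * x ^+ (2 * n - 2 * k - 2 * j) = x ^+ ((2 * n).+1 - 2 * j).
  by move=> h1 h2; rewrite -exprD; congr (_ ^+ _); lia.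
split.
  case=> [|m'] n // _.
  transitivity (\sum_(k < n.+1) \sum_(j < (n - k).+1)
     Wi R T m'.+1 n k * vc R (2 * n - 2 * k) m'.+1 j * (s ^+ j * x ^+ ((2 * n).+1 - 2 * j))); last first.
    apply: eq_bigr => k _.
    have hk : (k <= n)%N by exact: ltnSE (ltn_ord k).
    rewrite (vpolyE_h hchar x s _ (half_diff n k)) mulr_sumr; apply: eq_bigr => j _.
    have hj : (j <= n - k)%N by exact: ltnSE (ltn_ord j).
    rewrite -(expo n k j) // /Wi; ring.
  rewrite (tri_swap n (fun k j => Wi R T m'.+1 n k * vc R (2 * n - 2 * k) m'.+1 j
     * (s ^+ j * x ^+ ((2 * n).+1 - 2 * j)))).
  rewrite (vpolyE_h hchar x s _ (half_odd n)); apply: eq_bigr => j _.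
  have hj : (j <= n)%N by exact: ltnSE (ltn_ord j).
  by rewrite -mulr_suml -coef_sum_i.
move=> n.
set E := (-1) ^+ n * (ratr (T (2 * n).+1) / 2 ^+ (2 * n).+1) * x ^+ (2 * n).+1.
transitivity (\sum_(k < n.+1) \sum_(j < (n - k).+1)
     W0 R T n k * vc R (2 * n - 2 * k) 0 j * (s ^+ j * x ^+ ((2 * n).+1 - 2 * j)) + E); last first.
  rewrite big_ord_recr /= [X in _ + X + _ = _]big_ord_recr /= !subnn big_ord0 add0r (vc00 hchar) muln0 subn0 expr0 mul1r mulr1 -addrA; congr (_ + _).
    apply: eq_bigr => k _.
    have hk : (k <= n)%N by exact: ltnW (ltn_ord k).
    rewrite (vpolyE_h hchar x s _ (half_diff n k)) mulr_sumr; apply: eq_bigr => j _.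
    have hj : (j <= n - k)%N by exact: ltnSE (ltn_ord j).
    rewrite -(expo n k j) // /W0; ring.
  rewrite /E /W0 binn exprS.
  have h2 := two_neq0 hchar.
  field.
  by rewrite expf_neq0.
rewrite (tri_swap n (fun k j => W0 R T n k * vc R (2 * n - 2 * k) 0 j
     * (s ^+ j * x ^+ ((2 * n).+1 - 2 * j)))).
rewrite (vpolyE_h hchar x s _ (half_odd n)) [LHS]big_ord_recl [X in _ = X + _]big_ord_recl /= addrAC.
congr (_ + _).
  rewrite -mulr_suml subn0 (coef0 hchar hT) muln0 subn0 expr0 mul1r mulrDl.
  by rewrite /E; congr (_ + _).
apply: eq_bigr => j _.
have hj : (j.+1 <= n)%N by exact: ltn_ord j.
by rewrite -mulr_suml -coef_sum_ii.
Qed.
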